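(* Let $\delta>0$ and let $b>0$ be an integer. Suppose that $M$ is a $(\delta,b)$-map of perimeter $n$ and that every vertex of $M$ is at distance at most $r$ from a boundary vertex, or from a non-flat interior vertex, or from a vertex of a non-flat face of $M$. Then $\mathrm{Area}(M)\le Ln$, where $L$ depends only on $\delta,b,r$ and is exponential in $r$.
   Context: A map is a finite, connected, simply connected 2-complex embedded in the plane; $\mathrm{Area}(M)$ is its number of faces, its perimeter is the length of its closed boundary path, and distances are combinatorial distances in the 1-skeleton. Degrees of vertices (number of oriented edges starting there, loops counted twice) and of faces (length of the boundary path) are as usual. A corner of a face $\Pi$ at a vertex $o$ is a pair of consecutive edges $e,f$ of the boundary path of $\Pi$ with $e_+=f_-=o$. An angle function assigns a non-negative real number (angle) to each corner of each face. For a face $\Pi$ of degree $d$, let $\Sigma_\Pi$ be the sum of its corner angles; its curvature is $\Sigma_\Pi-\pi(d-2)$. For a vertex $o$, let $\Sigma_o$ be the sum of angles of all corners at $o$ and $\mu(o)$ the number of times the boundary path of $M$ passes through $o$; its curvature is $(2-\mu(o))\pi-\Sigma_o$. A face or interior vertex is flat if its curvature is $0$, non-flat otherwise. A $(\delta,b)$-map is a map with an angle function such that every non-flat face and every non-flat interior vertex has curvature at most $-\delta$, and every vertex and every face has degree at most $b$. *)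

(* Defs.v *)
From HB Require Import structures.
From mathcomp Require Import all_boot all_order all_algebra.
From mathcomp Require Import reals trigo.

Set Implicit Arguments.
Unset Strict Implicit.
Unset Printing Implicit Defensive.

Import Order.TTheory GRing.Theory Num.Theory.

(* A map is encoded as a rooted planar combinatorial map:
   - D       : the darts (oriented edges);
   - alpha   : reversal of orientation (fixed-point free involution);
   - phi     : the face permutation, phi d = the dart following d along the
               boundary path of the face (region) on its side;
   - o0      : a dart of the outer (unbounded) region.
   The tail vertex of a dart d is its orbit under sigma := phi \o alpha;
   the head of d is the tail of alpha d (= tail of phi d).
   Regions are the phi-orbits; the region of o0 is the complement of M in
   the plane, its phi-orbit is the boundary path of M; all other phi-orbits
   are the faces of M. *)

Section MapDefs.
Variables (D : finType) (alpha phi : D -> D) (o0 : D).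

Definition sigma (d : D) : D := phi (alpha d).

Definition same_vertex (x y : D) : bool := fconnect sigma x y.
Definition same_region (x y : D) : bool := fconnect phi x y.

Definition outer (d : D) : bool := same_region o0 d.
Definition inner (d : D) : bool := ~~ outer d.

Definition nverts : nat := fcard sigma predT.
Definition nregions : nat := fcard phi predT.

(* finite, connected, planar (genus 0, Euler: V - E + F = 2 with E = #|D|/2) *)
Definition is_planar_map : Prop :=
  [/\ injective phi,
      involutive alpha,
      (forall d, alpha d != d),
      (forall x y, connect (fun u v => (v == alpha u) || (v == phi u)) x y)
    & (nverts + nregions).*2 = #|D| + 4].

(* Area = number of faces (regions other than the outer one) *)
Definition area : nat := nregions.-1.
Definition perimeter : nat := order phi o0.

Definition vdeg (d : D) : nat := order sigma d.
Definition fdeg (d : D) : nat := order phi d.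

(* mu(o): number of times the boundary path passes through the tail vertex
   of v, i.e. number of outer darts whose head is that vertex *)
Definition mu (v : D) : nat := #|[pred e | outer e & same_vertex v (alpha e)]|.

Variable R : realType.
Variable ang : D -> R.
(* ang e is the angle of the corner (e, phi e) of the face containing e,
   located at the head of e; only used for inner darts e. *)

Local Open Scope ring_scope.

Definition face_angle_sum (d : D) : R := \sum_(e | same_region d e) ang e.
Definition face_curv (d : D) : R :=
  face_angle_sum d - pi * ((fdeg d)%:R - 2).

Definition vertex_angle_sum (v : D) : R :=
  \sum_(e | inner e && same_vertex v (alpha e)) ang e.
Definition vertex_curv (v : D) : R :=
  (2 - (mu v)%:R) * pi - vertex_angle_sum v.

Definition interior_vertex (v : D) : bool := mu v == 0%N.
Definition boundary_vertex (v : D) : bool := (0 < mu v)%N.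

Definition delta_b_map (delta : R) (b : nat) : Prop :=
  [/\ is_planar_map,
      (forall e, inner e -> 0 <= ang e),
      (forall d, inner d -> face_curv d != 0 -> face_curv d <= - delta),
      (forall v, interior_vertex v -> vertex_curv v != 0 ->
                 vertex_curv v <= - delta)
    & (forall v, (vdeg v <= b)%N) /\ (forall d, inner d -> (fdeg d <= b)%N)].

(* within k x y : the tail vertices of x and y are at combinatorial distance
   at most k in the 1-skeleton *)
Fixpoint within (k : nat) (x y : D) : bool :=
  if k is k'.+1 then
    within k' x y || [exists d, same_vertex x d && within k' (alpha d) y]
  else same_vertex x y.

Definition special_vertex (w : D) : Prop :=
  boundary_vertex w \/
  (interior_vertex w /\ vertex_curv w != 0) \/
  (exists d, [&& inner d, face_curv d != 0 & same_vertex w d]).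

End MapDefs.

(* Main.v *)
Require Import Defs.
From HB Require Import structures.
From mathcomp Require Import all_boot all_order all_algebra.
From mathcomp Require Import reals trigo.
From mathcomp Require Import ring lra zify.
Import Order.TTheory GRing.Theory Num.Theory.
Local Open Scope ring_scope.


Section Gen.
Variable R : realType.
Variable T : finType.

Lemma sum_const_pred (P : pred T) (x : R) : \sum_(i | P i) x = x *+ #|P|.
Proof. by rewrite -sumr_const; apply: eq_bigl. Qed.

Variable f : T -> T.
Hypothesis injf : injective f.

Lemma order_conn x y : fconnect f x y -> order f x = order f y.
Proof.
move=> xy; rewrite /order; apply: eq_card => z.
exact: (same_connect (fconnect_sym injf) xy).
Qed.

Lemma card_conn_r y : #|[pred x | fconnect f x y]| = order f y.
Proof. by rewrite /order; apply: eq_card => z; rewrite inE fconnect_sym. Qed.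

Lemma orbit_sum (P : pred T) (g : T -> T) (h : T -> R) :
  \sum_d (\sum_(e | P e && fconnect f d (g e)) h e) / (order f d)%:R
  = \sum_(e | P e) h e.
Proof.
transitivity (\sum_d \sum_(e | P e)
   (if fconnect f d (g e) then h e / (order f d)%:R else 0)).
  apply: eq_bigr => d _; rewrite mulr_suml big_mkcondr; apply: eq_bigr => e _.
  by case: ifP; rewrite ?mul0r.
rewrite exchange_big; apply: eq_bigr => e _.
rewrite -big_mkcond /=.
rewrite (eq_bigr (fun _ => h e / (order f (g e))%:R)); last first.
  by move=> d /order_conn ->.
rewrite sum_const_pred card_conn_r -mulrnAr -[_^-1 *+ _]mulr_natr mulVf ?mulr1 //.
by rewrite pnatr_eq0 -lt0n order_gt0.
Qed.

Lemma orbit_count :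
  \sum_d 1 / (order f d)%:R = (fcard f predT)%:R :> R.
Proof.
have sym := fconnect_sym injf.
rewrite (partition_big (froot f) (froots f)) /=; last first.
  by move=> d _; exact: (roots_root sym).
rewrite /n_comp_mem -sum1_card natr_sum.
apply: eq_big => [r|r /eqP rr]; first by rewrite !inE andbT.
rewrite (eq_bigr (fun _ => 1 / (order f r)%:R)); last first.
  move=> d /eqP <-; congr (_ / _%:R); apply: order_conn.
  exact: (connect_root _ d).
rewrite (eq_bigl (fconnect f r)); last first.
  by move=> d /=; rewrite -{1}rr (root_connect sym) sym.
rewrite (sum_const_pred (fconnect f r)) -/(order f r) mul1r -[_ *+ _]mulr_natr mulVf //.
by rewrite pnatr_eq0 -lt0n order_gt0.
Qed.

End Gen.
Arguments sum_const_pred {R T} P x.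
Arguments orbit_sum {R T f} injf P g h.
Arguments orbit_count R {T f} injf.
Arguments order_conn {T f} injf {x y}.
Arguments card_conn_r {T f} injf y.

Lemma card_ex_le (T : finType) (P : pred T) (Rl : T -> T -> bool) :
  (#|[pred x | [exists d, P d && Rl x d]]| <= \sum_(d | P d) #|[pred x | Rl x d]|)%N.
Proof.
rewrite -sum1_card.
apply: (@leq_trans (\sum_x \sum_(d | P d) (Rl x d : nat))).
  rewrite big_mkcond /=; apply: leq_sum => x _; rewrite inE.
  case: existsP => [[d /andP[Pd Rxd]]|_] //.
  by rewrite (bigD1 d) //= Rxd.
rewrite exchange_big; apply: leq_sum => d _.
apply: eq_leq; rewrite -sum1_card [RHS]big_mkcond /=; apply: eq_bigr => x _.
by rewrite inE; case: (Rl x d).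
Qed.

Lemma div_bound (R : realType) (x d k bb : R) :
  0 < d -> x <= - d -> 0 < k -> k <= bb -> x / k <= - d / bb.
Proof.
move=> d0 xd k0 kb.
have b0 : 0 < bb by apply: lt_le_trans kb.
rewrite ler_pdivrMr // mulrAC ler_pdivlMr //.
nra.
Qed.

Lemma sum_sub_le (R : realType) (T : finType) (P : pred T) (F : T -> R) :
  (forall i, 0 <= F i) -> \sum_(i | P i) F i <= \sum_i F i.
Proof.
move=> F0; rewrite [X in _ <= X](bigID P) /= lerDl.
by apply: sumr_ge0.
Qed.

Lemma card_or_le (T : finType) (P Q : pred T) :
  (#|[pred x | P x || Q x]| <= #|P| + #|Q|)%N.
Proof. by rewrite -cardUI; apply: leq_trans (leq_addr _ _); apply: eq_leq; apply: eq_card. Qed.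

Lemma sum_nat_const_pred (T : finType) (P : pred T) (c : nat) :
  (\sum_(i | P i) c = #|P| * c)%N.
Proof. by rewrite -sum_nat_const; apply: eq_bigl. Qed.

Arguments div_bound {R x d k bb}.
Arguments sum_sub_le {R T} P F.
Arguments card_or_le {T} P Q.
Arguments sum_nat_const_pred {T} P c.
Arguments card_ex_le {T} P Rl.


Section Main.
Variables (R : realType) (delta : R) (b : nat) (D : finType)
  (alpha phi : D -> D) (o0 : D) (ang : D -> R).
Hypothesis dpos : 0 < delta.
Hypothesis bpos : (0 < b)%N.
Hypothesis H : delta_b_map alpha phi o0 ang delta b.

Let injphi : injective phi. Proof. by case: H => [[]]. Qed.
Let invol : involutive alpha. Proof. by case: H => [[]]. Qed.
Let euler : ((nverts alpha phi + nregions phi).*2 = #|D| + 4)%N.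
Proof. by case: H => [[]]. Qed.
Let angnn : forall e, inner phi o0 e -> 0 <= ang e. Proof. by case: H. Qed.
Let fcH : forall d, inner phi o0 d -> face_curv phi ang d != 0 ->
   face_curv phi ang d <= - delta. Proof. by case: H. Qed.
Let vcH : forall v, interior_vertex alpha phi o0 v -> vertex_curv alpha phi o0 ang v != 0 ->
   vertex_curv alpha phi o0 ang v <= - delta. Proof. by case: H. Qed.
Let vdegb : forall v, (vdeg alpha phi v <= b)%N. Proof. by case: H => _ _ _ _ []. Qed.
Let fdegb : forall d, inner phi o0 d -> (fdeg phi d <= b)%N.
Proof. by case: H => _ _ _ _ []. Qed.

Let injs : injective (sigma alpha phi).
Proof. exact: inj_comp injphi (inv_inj invol). Qed.

Let outer_conn d e : fconnect phi d e -> outer phi o0 d = outer phi o0 e.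
Proof. move=> de; exact: (same_connect_r (fconnect_sym injphi) de o0). Qed.

Let n := perimeter phi o0.
Let card_outer : #|[pred d | outer phi o0 d]| = n.
Proof. by apply: eq_card. Qed.

Let fdeg_gt0 d : (0 < fdeg phi d)%N. Proof. exact: order_gt0. Qed.
Let vdeg_gt0 d : (0 < vdeg alpha phi d)%N. Proof. exact: order_gt0. Qed.
Let fdeg_neq0 d : (fdeg phi d)%:R != 0 :> R.
Proof. by rewrite pnatr_eq0 -lt0n. Qed.
Let vdeg_neq0 d : (vdeg alpha phi d)%:R != 0 :> R.
Proof. by rewrite pnatr_eq0 -lt0n. Qed.

Let SA := \sum_(e | inner phi o0 e) ang e.

Lemma F1a : \sum_(d | inner phi o0 d) face_angle_sum phi ang d / (fdeg phi d)%:R = SA.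
Proof.
rewrite /SA -(orbit_sum injphi (inner phi o0) id ang) big_mkcond /=.
apply: eq_bigr => d _; rewrite /face_angle_sum /fdeg /same_region.
case: ifP => Hd.
  congr (_ / _); apply: eq_bigl => e /=.
  case E: (fconnect phi d e); rewrite ?andbF // andbT.
  by move: Hd; rewrite /inner (outer_conn _ _ E).
rewrite big_pred0 ?mul0r // => e; apply/negbTE/andP => -[ie de].
by move: Hd ie; rewrite /inner (outer_conn _ _ de) => ->.
Qed.

Lemma F1b : \sum_(d | inner phi o0 d) 1 / (fdeg phi d)%:R = (nregions phi)%:R - 1 :> R.
Proof.
have := orbit_count R injphi; rewrite (bigID (outer phi o0)) /= => <-.
suff -> : \sum_(i | outer phi o0 i) 1 / (order phi i)%:R = 1 :> R.
  by rewrite addrC addrK.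
rewrite (eq_bigr (fun _ => 1 / (order phi o0)%:R)); last first.
  by move=> d od; rewrite (order_conn injphi od).
rewrite (sum_const_pred (outer phi o0)) (eq_card (B := fconnect phi o0)) //.
by rewrite -/(order phi o0) mul1r -[_ *+ _]mulr_natr mulVf // pnatr_eq0 -lt0n order_gt0.
Qed.


Let mu' := mu alpha phi o0.
Let vd := vdeg alpha phi.

Lemma F2a : \sum_d (mu' d)%:R / (vd d)%:R = n%:R :> R.
Proof.
rewrite -card_outer -sum_const_pred -(orbit_sum injs (outer phi o0) alpha (fun _ => 1)).
apply: eq_bigr => d _; rewrite /mu' /mu -sum_const_pred.
by [].
Qed.

Lemma F2b : \sum_d vertex_angle_sum alpha phi o0 ang d / (vd d)%:R = SA.
Proof. exact: (orbit_sum injs (inner phi o0) alpha ang). Qed.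

Lemma F2c : \sum_d 1 / (vd d)%:R = (nverts alpha phi)%:R :> R.
Proof. exact: (orbit_count R injs). Qed.

Let inner_card : (#|[pred d | inner phi o0 d]| + n = #|D|)%N.
Proof.
rewrite -card_outer addnC; rewrite -(cardC (mem (outer phi o0))).
by congr (_ + _); apply: eq_card.
Qed.

Let FC := \sum_(d | inner phi o0 d) face_curv phi ang d / (fdeg phi d)%:R.
Let VC := \sum_d vertex_curv alpha phi o0 ang d / (vd d)%:R.

Lemma GB : FC + VC = 2 * pi.
Proof.
have e1 : FC = SA - pi * (#|[pred d | inner phi o0 d]|)%:R + 2 * pi * ((nregions phi)%:R - 1).
  have -> : pi * (#|[pred d | inner phi o0 d]|)%:R = \sum_(d | inner phi o0 d) pi :> R.
    rewrite (sum_const_pred (inner phi o0) pi). rewrite mulr_natr; congr (_ *+ _); apply: eq_card.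
  rewrite -F1a -F1b /FC mulr_sumr -sumrB -big_split /=; apply: eq_bigr => d _.
  rewrite /face_curv; field; exact: fdeg_neq0.
have e2 : VC = 2 * pi * (nverts alpha phi)%:R - pi * n%:R - SA.
  rewrite -F2a -F2b -F2c /VC !mulr_sumr -!sumrB; apply: eq_bigr => d _.
  rewrite /vertex_curv /mu'; field; exact: vdeg_neq0.
rewrite e1 e2.
have E1 : (#|[pred d | inner phi o0 d]|)%:R + n%:R = (#|D|)%:R :> R.
  by rewrite -natrD inner_card.
have E2 : 2 * ((nverts alpha phi)%:R + (nregions phi)%:R) = (#|D|)%:R + 4 :> R.
  by rewrite -(natrD _ (#|D|) 4) -euler -muln2 natrM natrD mulrC.
set i := (#|[pred d | inner phi o0 d]|)%:R in E1 *.
set V := (nverts alpha phi)%:R in E2 *.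
set F := (nregions phi)%:R in E2 *.
set N := n%:R in E1 *.
set DD := (#|D|)%:R in E1 E2.
have E : 2 * F + 2 * V - 2 - i - N = 2 by lra.
transitivity (pi * (2 * F + 2 * V - 2 - i - N)); first by ring.
by rewrite E mulrC.
Qed.

Let c := delta / b%:R.
Let b0 : 0 < b%:R :> R. Proof. by rewrite ltr0n. Qed.
Let c0 : 0 < c. Proof. by rewrite /c divr_gt0. Qed.

Let A := #|[pred d | inner phi o0 d && (face_curv phi ang d != 0)]|.
Let B := #|[pred d | interior_vertex alpha phi o0 d && (vertex_curv alpha phi o0 ang d != 0)]|.

Lemma FB : FC <= - c * A%:R.
Proof.
rewrite /FC /A [- c * _]mulr_natr -(sum_const_pred [pred d | inner phi o0 d && (face_curv phi ang d != 0)]) /=.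
rewrite big_mkcondr /=; apply: ler_sum => d Hd.
case: ifP => [fc|/negbT]; last by rewrite negbK => /eqP ->; rewrite mul0r.
rewrite /c -mulNr; apply: div_bound => //; first exact: fcH.
  by rewrite ltr0n.
by rewrite ler_nat fdegb.
Qed.

Lemma VB : VC <= - c * B%:R + pi * n%:R.
Proof.
rewrite /VC /B [- c * _]mulr_natr -F2a mulr_sumr.
rewrite -(sum_const_pred [pred d | interior_vertex alpha phi o0 d && (vertex_curv alpha phi o0 ang d != 0)]) /=.
rewrite [in X in _ <= X]big_mkcond /= -big_split /=; apply: ler_sum => d _.
have vas0 : 0 <= vertex_angle_sum alpha phi o0 ang d.
  by apply: sumr_ge0 => e /andP[ie _]; exact: angnn.
have vd0 : 0 < (vd d)%:R :> R by rewrite ltr0n.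
case: (boolP (interior_vertex alpha phi o0 d)) => /= Hi.
  have mu0 : mu' d = 0%N by apply/eqP.
  rewrite mu0 mul0r mulr0 addr0.
  case: ifP => [vc|/negbT]; last by rewrite negbK => /eqP ->; rewrite mul0r.
  rewrite /c -mulNr; apply: div_bound => //; first exact: vcH.
  by rewrite ler_nat vdegb.
rewrite add0r mulrA ler_pM2r ?invr_gt0 //.
have mu1 : 1 <= (mu' d)%:R :> R.
  by rewrite ler1n lt0n; move: Hi; rewrite /interior_vertex.
rewrite /vertex_curv -/mu'.
have := pi_ge0 R; nra.
Qed.

Lemma nonflat_bound : (A + B)%:R <= pi * n%:R / c.
Proof.
have := GB; have := FB; have := VB; have := pi_gt0 R => p0 h1 h2 h3.
rewrite ler_pdivlMr // natrD.
nra.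
Qed.

Lemma Bd_bound : (#|[pred w | boundary_vertex alpha phi o0 w]|)%:R <= b%:R * n%:R :> R.
Proof.
rewrite -F2a mulr_sumr -sum1_card natr_sum.
apply: le_trans (sum_sub_le (fun w => boundary_vertex alpha phi o0 w) _ _).
  apply: ler_sum => w /= Hw.
  have mu1 : 1 <= (mu' w)%:R :> R by rewrite ler1n.
  have vd0 : 0 < (vd w)%:R :> R by rewrite ltr0n.
  have q1 : 1 <= b%:R / (vd w)%:R :> R.
    by rewrite ler_pdivlMr // mul1r ler_nat vdegb.
  rewrite mulrA [b%:R * _]mulrC -mulrA.
  nra.
move=> w; apply: mulr_ge0; first by rewrite ler0n.
by apply: divr_ge0; rewrite ler0n.
Qed.

Lemma Fs_bound :
  (#|[pred w | [exists d, (inner phi o0 d && (face_curv phi ang d != 0%R))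
        && same_vertex alpha phi w d]]| <= b * A)%N.
Proof.
apply: leq_trans (card_ex_le (fun d => inner phi o0 d && (face_curv phi ang d != 0))
   (fun w d => same_vertex alpha phi w d)) _.
apply: leq_trans (_ : \sum_(d | inner phi o0 d && (face_curv phi ang d != 0%R)) b <= _)%N.
  apply: leq_sum => d _.
  rewrite (eq_card (B := [pred x | fconnect (sigma alpha phi) x d])) // card_conn_r //; exact: vdegb.
rewrite (sum_nat_const_pred (fun d => inner phi o0 d && (face_curv phi ang d != 0))) mulnC.
by rewrite /A; apply: eq_leq; congr (_ * _); apply: eq_card.
Qed.

Definition specialb w :=
  [|| boundary_vertex alpha phi o0 w,
      interior_vertex alpha phi o0 w && (vertex_curv alpha phi o0 ang w != 0)
    | [exists d, (inner phi o0 d && (face_curv phi ang d != 0))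
        && same_vertex alpha phi w d]].

Lemma specialP w : special_vertex alpha phi o0 ang w -> specialb w.
Proof.
rewrite /specialb => -[->//|[[-> ->]|[d /and3P[i f s]]]]; first by rewrite orbT.
by apply/orP; right; apply/orP; right; apply/existsP; exists d; rewrite i f s.
Qed.

Lemma special_card : (#|specialb|%:R <= b%:R * n%:R + b%:R * (A + B)%:R :> R).
Proof.
set Bd := #|[pred w | boundary_vertex alpha phi o0 w]|.
set Fs := #|[pred w | [exists d, (inner phi o0 d && (face_curv phi ang d != 0%R))
        && same_vertex alpha phi w d]]|.
have hS : (#|specialb| <= Bd + (B + Fs))%N.
  apply: leq_trans (card_or_le (fun w => boundary_vertex alpha phi o0 w)
  (fun w => (interior_vertex alpha phi o0 w && (vertex_curv alpha phi o0 ang w != 0))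
   || [exists d, (inner phi o0 d && (face_curv phi ang d != 0))
        && same_vertex alpha phi w d])) _.
  apply: leq_add; first by apply: eq_leq; rewrite /Bd; apply: eq_card.
  apply: leq_trans (card_or_le (fun w => interior_vertex alpha phi o0 w && (vertex_curv alpha phi o0 ang w != 0))
  (fun w => [exists d, (inner phi o0 d && (face_curv phi ang d != 0))
        && same_vertex alpha phi w d])) _.
  by apply: leq_add; apply: eq_leq; rewrite ?/Fs ?/B; apply: eq_card.
have h3 : (Fs <= b * A)%N := Fs_bound.
have h4 := Bd_bound.
have hb : (B <= b * B)%N by rewrite leq_pmull.
have hn2 : (#|specialb| <= Bd + b * (A + B))%N by lia.
apply: le_trans (_ : (Bd + b * (A + B))%:R <= _).
  by rewrite ler_nat.
by rewrite natrD natrM lerD2r.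
Qed.

Lemma alpha_card (P : pred D) : #|[pred d | P (alpha d)]| = #|P|.
Proof.
rewrite -(card_image (inv_inj invol) [pred d | P (alpha d)]).
apply: eq_card => x; rewrite -{1}(invol x) mem_image ?inE /= ?invol //.
exact: inv_inj invol.
Qed.

Lemma ball_card k y : (#|[pred x | within alpha phi k x y]| <= b * (b+1)^k)%N.
Proof.
elim: k y => [|k IH] y.
  rewrite (eq_card (B := [pred x | fconnect (sigma alpha phi) x y])) // card_conn_r //.
  by rewrite expn0 muln1; exact: vdegb.
apply: leq_trans (card_or_le (fun x => within alpha phi k x y)
   (fun x => [exists d, same_vertex alpha phi x d && within alpha phi k (alpha d) y])) _.
have hQ : (#|(fun x => [exists d, same_vertex alpha phi x d && within alpha phi k (alpha d) y])|
   <= b * #|[pred x | within alpha phi k x y]|)%N.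
  rewrite (eq_card (B := [pred x | [exists d, within alpha phi k (alpha d) y && same_vertex alpha phi x d]])); last first.
    move=> x; rewrite !inE /=; apply/existsP/existsP => -[d]; rewrite andbC; by exists d.
  apply: leq_trans (card_ex_le (fun d => within alpha phi k (alpha d) y) (fun x d => same_vertex alpha phi x d)) _.
  apply: leq_trans (_ : \sum_(d | within alpha phi k (alpha d) y) b <= _)%N.
    apply: leq_sum => d _.
    rewrite (eq_card (B := [pred x | fconnect (sigma alpha phi) x d])) // card_conn_r //; exact: vdegb.
  rewrite (sum_nat_const_pred (fun d => within alpha phi k (alpha d) y)) mulnC.
  rewrite -(alpha_card (fun d => within alpha phi k d y)).
  by apply: eq_leq; congr (_ * _); apply: eq_card.
have h1 : (#|(fun x => within alpha phi k x y)| <= b * (b+1)^k)%N.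
  by apply: leq_trans (IH y); apply: eq_leq; apply: eq_card.
have h2 : (#|(fun x => within alpha phi k x y)| = #|[pred x | within alpha phi k x y]|).
  by apply: eq_card.
rewrite h2 in h1; move: h1 hQ; rewrite h2 expnS.
set N := #|[pred x | _]|; set X := ((b+1)^k)%N; set Q := #|_|.
move=> h1 hQ; nia.
Qed.

Variable r : nat.
Hypothesis Hcov : forall v : D, exists w : D,
   within alpha phi r v w /\ special_vertex alpha phi o0 ang w.

Lemma darts_bound : (#|D| <= #|specialb| * (b * (b+1)^r))%N.
Proof.
have -> : #|D| = #|[pred x | [exists w, specialb w && within alpha phi r x w]]|.
  apply: eq_card => x; rewrite !inE /=; symmetry; apply/existsP.
  by case: (Hcov x) => w [h1 h2]; exists w; rewrite specialP.
apply: leq_trans (card_ex_le specialb (fun x w => within alpha phi r x w)) _.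
apply: leq_trans (_ : \sum_(w | specialb w) (b * (b+1)^r) <= _)%N.
  by apply: leq_sum => w _; exact: ball_card.
by rewrite (sum_nat_const_pred specialb).
Qed.

Lemma area_bound :
  (area phi)%:R <= b%:R ^+ 2 * (1 + pi / (delta / b%:R)) * (b+1)%:R ^+ r * n%:R :> R.
Proof.
have hA : (area phi <= #|D|)%N.
  apply: leq_trans (leq_pred _) _; exact: max_card.
have hD := darts_bound.
have hS := special_card.
have hN := nonflat_bound.
apply: le_trans (_ : (#|specialb| * (b * (b+1)^r))%:R <= _).
  by rewrite ler_nat (leq_trans hA hD).
rewrite natrM.
set M := (b * (b+1)^r)%:R.
have M0 : 0 <= M :> R by rewrite ler0n.
apply: le_trans (_ : (b%:R * n%:R + b%:R * (pi * n%:R / c)) * M <= _).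
  rewrite ler_wpM2r //; apply: le_trans hS _; rewrite lerD2l ler_wpM2l //.
rewrite /M natrM natrX natrD /c.
have bn0 : b%:R != 0 :> R by rewrite pnatr_eq0 -lt0n.
have d0 : delta != 0 by rewrite gt_eqF.
rewrite le_eqVlt; apply/orP; left; apply/eqP; field.
by rewrite d0 bn0.
Qed.

End Main.


Theorem theorem1p5 (R : realType) (delta : R) (b : nat) :
  0 < delta -> (0 < b)%N ->
  exists K C : R, forall (r : nat) (D : finType) (alpha phi : D -> D) (o0 : D)
    (ang : D -> R),
    delta_b_map alpha phi o0 ang delta b ->
    (forall v : D, exists w : D,
        within alpha phi r v w /\ special_vertex alpha phi o0 ang w) ->
    (area phi)%:R <= K * C ^+ r * (perimeter phi o0)%:R.
Proof.
move=> dpos bpos.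
exists (b%:R ^+ 2 * (1 + pi / (delta / b%:R))), ((b+1)%:R).
move=> r D alpha phi o0 ang Hm Hc.
exact: (area_bound R delta b D alpha phi o0 ang dpos bpos Hm r Hc).
Qed.
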